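(* Let $G$ be a transitive and finite directed graph which is not a cycle, and let $\widetilde{G}$ be a graph obtained from $G$ by repeatedly applying edge contractions $G'\mapsto G'/e$ along edges $e$ whose range has in-degree $1$ (in the current graph $G'$), until no such edges remain. Then $\widetilde{G}$ has in-degree at least $2$ at every vertex, and if $\widetilde{G}$ has $B(\mathcal{H})$ as a free semigroupoid algebra, then $G$ also has $B(\mathcal{K})$ as a free semigroupoid algebra for some Hilbert space $\mathcal{K}$.
   Context: A directed graph $G=(V,E,r,s)$; in-degree of $v$ is $|r^{-1}(v)|$; $G$ is transitive if there is a path between any two vertices. ''$G$ is a cycle'' means $G$ is the $n$-cycle graph for some $n\ge1$. The edge contraction $G/e$ removes $e$ and identifies $s(e)$ with $r(e)$; when $r(e)\neq s(e)$ the vertex $r(e)$ is removed and edges with source/range $r(e)$ are redirected to have source/range $s(e)$. A TCK family on $\mathcal{H}$: $S_v$ pairwise orthogonal projections, $S_e^*S_e=S_{s(e)}$, $\sum_{e\in F}S_eS_e^*\le S_v$ for finite $F\subseteq r^{-1}(v)$, and $\mathrm{SOT}\text{-}\sum_vS_v=I$. ''Having $B(\mathcal{H})$ as a free semigroupoid algebra'' means there is a TCK family on $\mathcal{H}$ whose generated WOT-closed algebra is $B(\mathcal{H})$. *)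

(* Defs.v *)
From HB Require Import structures.
From mathcomp Require Import all_boot all_order all_algebra.
From mathcomp Require Import complex.
From mathcomp Require Import Rstruct.

Set Implicit Arguments.
Unset Strict Implicit.
Unset Printing Implicit Defensive.

Import Order.TTheory GRing.Theory Num.Theory.
Local Open Scope ring_scope.

Record graph := Graph {
  gV : finType;
  gE : finType;
  gr : gE -> gV;   (* range  *)
  gs : gE -> gV    (* source *)
}.

Definition indeg (G : graph) (v : gV G) : nat := #|[set e | gr e == v]|.

Fixpoint path_from_to (G : graph) (v w : gV G) (p : seq (gE G)) : Prop :=
  match p with
  | [::] => False
  | e :: p' =>
      gs e = v /\ (match p' with [::] => gr e = w
                               | _ => path_from_to (gr e) w p' end)
  end.

Definition transitive_graph (G : graph) : Prop :=
  forall v w : gV G, exists p : seq (gE G), path_from_to v w p.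

Definition is_cycle (G : graph) : Prop :=
  exists n : nat, (0 < n)%N /\
  exists (fV : gV G -> 'I_n) (fE : gE G -> 'I_n),
    bijective fV /\ bijective fE /\
    (forall e, fV (gs e) = fE e) /\
    (forall e, fV (gr e) = ordS (fE e)).

Definition cV_pred (G : graph) (e : gE G) (v : gV G) : bool :=
  (gr e == gs e) || (v != gr e).

Definition redirect (G : graph) (e : gE G) (x : gV G) : gV G :=
  if x == gr e then gs e else x.

Lemma redirect_ok (G : graph) (e : gE G) (x : gV G) :
  cV_pred e (redirect e x).
Proof.
rewrite /cV_pred /redirect.
case: (x =P gr e) => [_|/eqP ->]; last by rewrite orbT.
by case: (gr e =P gs e) => [->//|/eqP]; rewrite eq_sym => ->; rewrite orbT.
Qed.

Definition contract (G : graph) (e : gE G) : graph :=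
  @Graph {v : gV G | cV_pred e v} {f : gE G | f != e}
    (fun f => exist _ (redirect e (gr (val f))) (redirect_ok e _))
    (fun f => exist _ (redirect e (gs (val f))) (redirect_ok e _)).

Definition contract_step (G H : graph) : Prop :=
  exists e : gE G, indeg (gr e) = 1%N /\ H = contract e.

Inductive contracts_to : graph -> graph -> Prop :=
  | ct_refl G : contracts_to G G
  | ct_step G G1 H : contract_step G G1 -> contracts_to G1 H -> contracts_to G H.

Definition fully_contracted (G : graph) : Prop :=
  forall e : gE G, indeg (gr e) <> 1%N.

Local Open Scope complex_scope.
Definition C : numClosedFieldType := (Rdefinitions.R)[i].
Local Close Scope complex_scope.

Record hilbert := Hilbert {
  hV : lmodType C;
  inner : hV -> hV -> C;
  inner_linear : forall (a : C) (x y z : hV),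
      inner (a *: x + y) z = a * inner x z + inner y z;
  inner_conj : forall x y : hV, inner y x = Num.conj (inner x y);
  inner_ge0 : forall x : hV, 0 <= inner x x;
  inner_eq0 : forall x : hV, inner x x = 0 -> x = 0;
  inner_complete : forall u : nat -> hV,
      (forall eps : C, 0 < eps -> exists N : nat, forall m n : nat,
          (N <= m)%N -> (N <= n)%N -> inner (u m - u n) (u m - u n) < eps) ->
      exists l : hV, forall eps : C, 0 < eps -> exists N : nat, forall n : nat,
          (N <= n)%N -> inner (u n - l) (u n - l) < eps
}.

Definition op (H : hilbert) := hV H -> hV H.

Definition bounded_op (H : hilbert) (T : op H) : Prop :=
  (forall (a : C) (x y : hV H), T (a *: x + y) = a *: T x + T y) /\
  exists M : C, forall x : hV H, `|inner (T x) (T x)| <= M * `|inner x x|.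

Definition is_adjoint (H : hilbert) (T Ts : op H) : Prop :=
  forall x y : hV H, inner (T x) y = inner x (Ts y).

Definition tck_family (G : graph) (H : hilbert)
    (Sv : gV G -> op H) (Se : gE G -> op H) : Prop :=
  (forall v, bounded_op (Sv v)) /\ (forall e, bounded_op (Se e)) /\
  exists Ses : gE G -> op H,
    (forall e, is_adjoint (Se e) (Ses e)) /\
    (forall v, is_adjoint (Sv v) (Sv v)) /\
    (forall v x, Sv v (Sv v x) = Sv v x) /\
    (forall v w, v != w -> forall x, Sv v (Sv w x) = 0) /\
    (forall e x, Ses e (Se e x) = Sv (gs e) x) /\
    (forall (v : gV G) (F : {set gE G}), (forall e, e \in F -> gr e = v) ->
        forall x, 0 <= inner (Sv v x - \sum_(e in F) Se e (Ses e x)) x) /\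
    (* SOT-sum_v S_v = I (finite sum, G finite) *)
    (forall x, \sum_(v : gV G) Sv v x = x).

Definition op_subalgebra (H : hilbert) (A : op H -> Prop) : Prop :=
  (forall T, A T -> bounded_op T) /\
  (forall T U, A T -> A U -> A (fun x => T x + U x)) /\
  (forall (a : C) T, A T -> A (fun x => a *: T x)) /\
  (forall T U, A T -> A U -> A (fun x => T (U x))).

Definition wot_closure (H : hilbert) (A : op H -> Prop) (T : op H) : Prop :=
  bounded_op T /\
  forall (s : seq (hV H * hV H)) (eps : C), 0 < eps ->
    exists U, A U /\ forall xy, xy \in s ->
      `|inner (T xy.1 - U xy.1) xy.2| < eps.

Definition wot_closed (H : hilbert) (A : op H -> Prop) : Prop :=
  forall T, wot_closure A T -> A T.

(* The WOT-closed algebra generated by the family is all of B(H):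
   every WOT-closed subalgebra of B(H) containing the generators is B(H). *)
Definition generates_BH (G : graph) (H : hilbert)
    (Sv : gV G -> op H) (Se : gE G -> op H) : Prop :=
  forall A : op H -> Prop,
    op_subalgebra A -> wot_closed A ->
    (forall v, A (Sv v)) -> (forall e, A (Se e)) ->
    forall T, bounded_op T -> A T.

Definition has_BH_fsa (G : graph) (H : hilbert) : Prop :=
  (exists x : hV H, x != 0) /\
  exists (Sv : gV G -> op H) (Se : gE G -> op H),
    tck_family Sv Se /\ generates_BH Sv Se.

(* Main.v *)
Require Import Defs.
From HB Require Import structures.
From mathcomp Require Import all_boot all_order all_algebra complex ring.
From Stdlib Require Import FunctionalExtensionality.
Import Order.TTheory GRing.Theory Num.Theory.
Set Implicit Arguments.
Unset Strict Implicit.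
Unset Printing Implicit Defensive.

Lemma path_ends (G : graph) (p : seq (gE G)) (v w : gV G) :
  path_from_to v w p -> (exists f, gs f = v) /\ (exists f, gr f = w).
Proof.
elim: p v => [//|f p IH] v /= [Hs Hp]; split; first by exists f.
by case: p IH Hp => [_ Hr|g p IH Hp]; [exists f | case: (IH _ Hp)].
Qed.

Lemma indeg_ge1 (G : graph) (v : gV G) : transitive_graph G -> (1 <= indeg v)%N.
Proof.
move=> /(_ v v) [p /path_ends [_ [f Hf]]].
rewrite /indeg card_gt0; apply/set0Pn; exists f; by rewrite inE Hf.
Qed.

Section Cyc.
Variable G : graph.
Hypothesis Htr : transitive_graph G.
Hypothesis H1 : forall v : gV G, indeg v = 1%N.

Lemma gr_inj : injective (@gr G).
Proof.
move=> e1 e2 E.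
have /cards1P [x Hx] : #|[set e | gr e == gr e1]| == 1%N by have := H1 (gr e1); rewrite /indeg => ->.
have : e1 \in [set e | gr e == gr e1] by rewrite inE.
have : e2 \in [set e | gr e == gr e1] by rewrite inE E.
by rewrite Hx !inE => /eqP -> /eqP ->.
Qed.

Lemma out_ex (v : gV G) : exists f, gs f == v.
Proof. have [p /path_ends [[f Hf] _]] := Htr v v; by exists f; apply/eqP. Qed.

Definition out (v : gV G) : gE G := xchoose (out_ex v).
Lemma gs_out v : gs (out v) = v.
Proof. exact/eqP/(xchooseP (out_ex v)). Qed.

Lemma out_inj : injective out.
Proof. by move=> x y E; rewrite -(gs_out x) E gs_out. Qed.

Lemma card_EV : #|gE G| <= #|gV G|.
Proof. exact: leq_card gr_inj. Qed.

Lemma out_gs e : out (gs e) = e.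
Proof.
have /codomP [v ->] := inj_card_onto out_inj card_EV e.
by rewrite gs_out.
Qed.

Definition sigma (v : gV G) : gV G := gr (out v).
Lemma sigma_gs e : sigma (gs e) = gr e.
Proof. by rewrite /sigma out_gs. Qed.

Lemma sigma_inj : injective sigma.
Proof. by move=> x y /gr_inj /out_inj. Qed.

Lemma path_conn p v w : path_from_to v w p -> fconnect sigma v w.
Proof.
elim: p v => [//|f p IH] v /= [Hs Hp].
have E : sigma v = gr f by rewrite -Hs sigma_gs.
case: p IH Hp => [_ <-|g p IH Hp]; first by rewrite -E fconnect1.
by apply: connect_trans (IH _ Hp); rewrite -E fconnect1.
Qed.

Lemma cycle_of (v0 : gV G) : is_cycle G.
Proof.
have conn v : fconnect sigma v0 v by have [p /path_conn] := Htr v0 v.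
exists (order sigma v0); split; first exact: order_gt0.
pose fV v := Ordinal (findex_max (conn v)).
pose gV' (i : 'I_(order sigma v0)) := iter i sigma v0.
have fVK : cancel fV gV' by move=> v; rewrite /gV' /= iter_findex.
have gVK : cancel gV' fV by move=> i; apply: val_inj; rewrite /= findex_iter.
exists fV, (fun e => fV (gs e)); split; first by exists gV'.
split; first by exists (fun i => out (gV' i)) => [e|i]; rewrite /= ?gs_out ?gVK // fVK out_gs.
split=> // e; apply: val_inj; rewrite /= -sigma_gs.
set x := gs e.
have Ex : x = iter (findex sigma v0 x) sigma v0 by rewrite iter_findex.
rewrite {1}Ex -iterS.
have := findex_max (conn x); rewrite leq_eqVlt => /orP [/eqP E|lt].
  by rewrite E (iter_order sigma_inj) findex0 modnn.
by rewrite findex_iter // modn_small.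
Qed.
End Cyc.

Section Contr.
Variables (G : graph) (e : gE G).
Hypothesis Hne : gr e != gs e.

Definition rho (x : gV G) : gV (contract e) := exist _ (redirect e x) (redirect_ok e x).

Lemma cV_predE v : cV_pred e v = (v != gr e).
Proof. by rewrite /cV_pred (negbTE Hne). Qed.

Lemma rho_val (v : gV (contract e)) : rho (val v) = v.
Proof.
apply: val_inj; case: v => v /= pv; rewrite /redirect.
by move: pv; rewrite cV_predE => /negbTE ->.
Qed.

Lemma rho_id (v : gV G) : v != gr e -> val (rho v) = v.
Proof. by rewrite /= /redirect => /negbTE ->. Qed.

Definition ein (f : gE G) : option (gE (contract e)) := insub f.

Lemma path_contract p v w : path_from_to v w p -> w != gr e ->
  path_from_to (G := contract e) (rho v) (rho w) (pmap ein p).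
Proof.
move=> + Hw; elim: p v => [//|f p IH] v /= [Hs Hp].
case: (eqVneq f e) => [Efe|fne].
  subst f; rewrite /ein insubF /=; last by rewrite eqxx.
  case: p IH Hp => [_ Hr|g p IH Hp]; first by rewrite Hr eqxx in Hw.
  have := IH _ Hp; congr path_from_to; apply: val_inj; rewrite /= /redirect eqxx.
  by rewrite -Hs eq_sym (negbTE Hne).
rewrite /ein insubT /=; split; first by rewrite Hs.
case: p IH Hp => [_ Hr|g p IH Hp]; first by rewrite Hr.
have := IH _ Hp; case: (pmap ein (g :: p)) => [//|h q] H.
by move: H; congr path_from_to.
Qed.

Lemma transitive_contract : transitive_graph G -> transitive_graph (contract e).
Proof.
move=> Htr v w; have [p Hp] := Htr (val v) (val w).
exists (pmap ein p); rewrite -(rho_val v) -(rho_val w).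
apply: path_contract Hp _; case: w => w /=; by rewrite cV_predE.
Qed.

Lemma indeg_contract (x : gV G) : x != gr e -> (indeg x <= indeg (rho x))%N.
Proof.
move=> Hx; rewrite /indeg.
rewrite -(card_imset _ val_inj); apply: subset_leq_card; apply/subsetP => f.
rewrite inE => /eqP Hf.
have fne : f != e by apply: contraNneq Hx => <-; rewrite Hf.
apply/imsetP; exists (exist _ f fne : gE (contract e)) => //.
rewrite inE; apply/eqP/val_inj; by rewrite /= Hf /redirect (negbTE Hx).
Qed.
End Contr.

Definition Inv (G : graph) := transitive_graph G /\
  forall v0 : gV G, exists x : gV G, (2 <= indeg x)%N.

Lemma inv_init G : transitive_graph G -> ~ is_cycle G -> Inv G.
Proof.
move=> Htr Hc; split=> // v0.
case: (pickP (fun x : gV G => 1 < indeg x)%N) => [x Hx|Hn]; first by exists x.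
exfalso; apply: Hc.
have H1 : forall v : gV G, indeg v = 1%N.
  by move=> v; apply: anti_leq; rewrite indeg_ge1 // andbT leqNgt Hn.
exact: cycle_of Htr H1 v0.
Qed.

Lemma path_enter (G : graph) p (x w : gV G) : path_from_to x w p -> x != w ->
  exists f, gs f != w /\ gr f = w.
Proof.
elim: p x => [//|f p IH] x /= [Hs Hp] Hxw.
case: p IH Hp => [_ Hr|g p IH Hp]; first by exists f; rewrite Hs.
case: (eqVneq (gr f) w) => [Hr|Hr]; first by exists f; rewrite Hs.
exact: IH Hp Hr.
Qed.

Lemma indeg1_uniq (G : graph) (e f : gE G) : indeg (gr e) = 1%N -> gr f = gr e -> f = e.
Proof.
move=> H1 Hf.
have /cards1P [x Hx] : #|[set g | gr g == gr e]| == 1%N by move: H1; rewrite /indeg => ->.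
have : e \in [set g | gr g == gr e] by rewrite inE.
have : f \in [set g | gr g == gr e] by rewrite inE Hf.
by rewrite Hx !inE => /eqP -> /eqP ->.
Qed.

Lemma inv_step (G : graph) (e : gE G) : Inv G -> indeg (gr e) = 1%N ->
  [/\ gr e != gs e, exists g, gs g = gr e & Inv (contract e)].
Proof.
move=> [Htr Hx] H1.
have Hne : gr e != gs e.
  apply/negP => /eqP E.
  have [x Hx2] := Hx (gr e).
  have xne : x != gr e by apply: contraTneq Hx2 => ->; rewrite H1.
  have [p Hp] := Htr x (gr e).
  have [f [Hs Hr]] := path_enter Hp xne.
  by move: Hs; rewrite (indeg1_uniq H1 Hr) E eqxx.
split=> //.
  have [p /path_ends [[g Hg] _]] := Htr (gr e) (gs e); by exists g.
split; first exact: transitive_contract.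
move=> v0; have [x Hx2] := Hx (val v0).
have xne : x != gr e by apply: contraTneq Hx2 => ->; rewrite H1.
exists (rho e x); exact: leq_trans Hx2 (indeg_contract xne).
Qed.

Lemma part1 (G : graph) : Inv G -> fully_contracted G -> forall v : gV G, (2 <= indeg v)%N.
Proof.
move=> [Htr _] Hf v; have := indeg_ge1 v Htr.
rewrite leq_eqVlt => /orP [/eqP E|//]; exfalso.
have : (0 < #|[set f | gr f == v]|)%N by move: (indeg_ge1 v Htr).
rewrite card_gt0 => /set0Pn [f]; rewrite inE => /eqP Ef.
by apply: (Hf f); rewrite Ef -E.
Qed.


Local Open Scope ring_scope.

Section Inner.
Variable H : hilbert.
Implicit Types x y z : hV H.

Lemma inner0l z : inner 0 z = 0.
Proof.
have := inner_linear 1 (0 : hV H) 0 z; rewrite scale1r addr0 mul1r => h.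
by symmetry; apply: (@addrI _ (inner 0 z)); rewrite addr0 -h.
Qed.

Lemma innerDl x y z : inner (x + y) z = inner x z + inner y z.
Proof. by have := inner_linear 1 x y z; rewrite scale1r mul1r. Qed.

Lemma innerZl a x z : inner (a *: x) z = a * inner x z.
Proof. by have := inner_linear a x 0 z; rewrite addr0 inner0l addr0. Qed.

Lemma innerNl x z : inner (- x) z = - inner x z.
Proof. by rewrite -scaleN1r innerZl mulN1r. Qed.

Lemma innerBl x y z : inner (x - y) z = inner x z - inner y z.
Proof. by rewrite innerDl innerNl. Qed.

Lemma innerDr x y z : inner z (x + y) = inner z x + inner z y.
Proof. by rewrite inner_conj innerDl rmorphD /= -!inner_conj. Qed.

Lemma innerZr a x z : inner z (a *: x) = Num.conj a * inner z x.
Proof. by rewrite inner_conj innerZl rmorphM /= -!inner_conj. Qed.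

Lemma inner0r z : inner z 0 = 0.
Proof. by rewrite inner_conj inner0l rmorph0. Qed.

Lemma innerNr x z : inner z (- x) = - inner z x.
Proof. by rewrite inner_conj innerNl rmorphN /= -!inner_conj. Qed.

Lemma innerBr x y z : inner z (x - y) = inner z x - inner z y.
Proof. by rewrite innerDr innerNr. Qed.

Lemma inner_sumr (I : finType) (P : pred I) (F : I -> hV H) z :
  inner z (\sum_(i | P i) F i) = \sum_(i | P i) inner z (F i).
Proof.
elim/big_rec2: _ => [|i a b _ <-]; first exact: inner0r.
by rewrite innerDr.
Qed.

Lemma inner_suml (I : finType) (P : pred I) (F : I -> hV H) z :
  inner (\sum_(i | P i) F i) z = \sum_(i | P i) inner (F i) z.
Proof.
elim/big_rec2: _ => [|i a b _ <-]; first exact: inner0l.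
by rewrite innerDl.
Qed.

Lemma inner_self_real x : inner x x \is Num.real.
Proof. exact: ger0_real (inner_ge0 x). Qed.

Lemma norm_inner_self x : `|inner x x| = inner x x.
Proof. exact: ger0_norm (inner_ge0 x). Qed.

Lemma pythag (a b : hV H) : inner a b = 0 -> inner (a + b) (a + b) = inner a a + inner b b.
Proof.
move=> h; rewrite innerDl !innerDr h.
have -> : inner b a = 0 by rewrite inner_conj h rmorph0.
by rewrite addr0 add0r.
Qed.

Lemma inner_eq0_all x : (forall y : hV H, inner y x = 0) -> x = 0.
Proof. by move=> h; apply: inner_eq0; apply: h. Qed.

End Inner.

Section Lin.
Variables H1 H2 : hilbert.
Definition lin (T : hV H1 -> hV H2) :=
  forall (a : C) (x y : hV H1), T (a *: x + y) = a *: T x + T y.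

Variable T : hV H1 -> hV H2.
Hypothesis LT : lin T.

Lemma lin0 : T 0 = 0.
Proof.
have := LT 1 0 0; rewrite !scale1r addr0 => h.
by symmetry; apply: (@addrI _ (T 0)); rewrite addr0 -h.
Qed.
Lemma linD x y : T (x + y) = T x + T y.
Proof. by have := LT 1 x y; rewrite !scale1r. Qed.
Lemma linZ a x : T (a *: x) = a *: T x.
Proof. by have := LT a x 0; rewrite !addr0 lin0 addr0. Qed.
Lemma linN x : T (- x) = - T x.
Proof. by rewrite -scaleN1r linZ scaleN1r. Qed.
Lemma linB x y : T (x - y) = T x - T y.
Proof. by rewrite linD linN. Qed.
Lemma lin_sum (I : finType) (P : pred I) (F : I -> hV H1) :
  T (\sum_(i | P i) F i) = \sum_(i | P i) T (F i).
Proof.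
elim/big_rec2: _ => [|i a b _ <-]; first exact: lin0.
by rewrite linD.
Qed.

Definition bop : Prop := lin T /\ exists M : C, 0 <= M /\ forall x, inner (T x) (T x) <= M * inner x x.
End Lin.

Lemma bop_comp (H1 H2 H3 : hilbert) (S : hV H1 -> hV H2) (T : hV H2 -> hV H3) :
  bop S -> bop T -> bop (fun x => T (S x)).
Proof.
move=> [LS [M1 [M1p HS]]] [LT [M2 [M2p HT]]]; split.
  by move=> a x y; rewrite LS LT.
exists (M2 * M1); split; first exact: mulr_ge0.
move=> x; apply: le_trans (HT _) _; rewrite -mulrA; exact: ler_wpM2l.
Qed.

Lemma bounded_bopP (H : hilbert) (T : op H) : bounded_op T <-> bop T.
Proof.
split=> [[LT [M HM]]|[LT [M [M0 HM]]]]; split=> //.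
  exists `|M|; split=> // x; have := HM x; rewrite !norm_inner_self => h.
  have h0 : 0 <= M * inner x x by apply: le_trans h; exact: inner_ge0.
  by apply: le_trans h _; rewrite -(ger0_norm h0) normrM norm_inner_self.
by exists M => x; rewrite !norm_inner_self.
Qed.

Section Ops.
Variable H : hilbert.
Implicit Types x y z : hV H.

Lemma para_le x y : inner (x - y) (x - y) <= 2%:R * (inner x x + inner y y).
Proof.
have E : inner (x - y) (x - y) + inner (x + y) (x + y) = 2%:R * (inner x x + inner y y).
  rewrite !innerDl !innerNl !innerDr !innerNr; ring.
by rewrite -E lerDl inner_ge0.
Qed.

Lemma innerNN x : inner (- x) (- x) = inner x x.
Proof. by rewrite innerNl innerNr opprK. Qed.

Section Proj.
Variable P : op H.
Hypotheses (LP : lin P) (AP : is_adjoint P P) (IP : forall x, P (P x) = P x).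

Lemma proj_sq x : inner (P x) (P x) = inner (P x) x.
Proof. by rewrite AP IP -AP. Qed.

Lemma proj_ge0 x : 0 <= inner (P x) x.
Proof. by rewrite -proj_sq inner_ge0. Qed.

Lemma proj_le x : inner (P x) (P x) <= inner x x.
Proof.
have Ex : x = P x + (x - P x) by rewrite addrC subrK.
have h : inner (P x) (x - P x) = 0 by rewrite AP (linB LP) IP subrr inner0r.
rewrite {3 4}Ex (pythag h); rewrite lerDl; exact: inner_ge0.
Qed.
End Proj.

Lemma adj_lin (T Ts : op H) : lin T -> is_adjoint T Ts -> lin Ts.
Proof.
move=> LT AT a x y; apply/eqP; rewrite -subr_eq0; apply/eqP.
apply: inner_eq0_all => z.
rewrite innerBr innerDr innerZr -!AT innerDr innerZr; exact: subrr.
Qed.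

Lemma partial_iso (T Ts P : op H) : lin T -> lin P -> is_adjoint T Ts ->
  (forall x, P (P x) = P x) -> (forall x, Ts (T x) = P x) ->
  forall x, T (P x) = T x.
Proof.
move=> LT LP AT IP TP x; apply/eqP; rewrite eq_sym -subr_eq0 -(linB LT); apply/eqP.
apply: inner_eq0; rewrite AT TP (linB LP) IP subrr inner0r //.
Qed.

Lemma adj_bound (T Ts P : op H) : lin P -> is_adjoint P P ->
  (forall x, P (P x) = P x) -> is_adjoint T Ts ->
  (forall y, 0 <= inner (P y - T (Ts y)) y) ->
  forall y, inner (Ts y) (Ts y) <= inner y y.
Proof.
move=> LP AP IP AT CK y; apply: le_trans (proj_le LP AP IP y).
rewrite (proj_sq AP IP) -AT -subr_ge0 -innerBl; exact: CK.
Qed.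

End Ops.

Module K.
Lemma small_eq0 (c : C) : 0 <= c -> (forall eps : C, 0 < eps -> c < eps) -> c = 0.
Proof.
move=> c0 h; apply/eqP; apply/negPn/negP => cn0.
have cp : 0 < c by rewrite lt_def cn0 c0.
by have := h c cp; rewrite ltxx.
Qed.

Section KS.
Variable H : hilbert.
Variable Tu : op H.
Hypotheses (LTu : lin Tu) (ATu : is_adjoint Tu Tu) (ITu : forall x, Tu (Tu x) = Tu x).

Definition Kpred : {pred (hV H * hV H)} := fun p => Tu p.2 == p.2.
Lemma Kpred_submod : submod_closed Kpred.
Proof.
split; first by rewrite unfold_in /Kpred /= (lin0 LTu).
move=> a p q; rewrite !unfold_in /Kpred /= => /eqP hp /eqP hq.
by rewrite LTu hp hq.
Qed.
HB.instance Definition _ := GRing.isSubmodClosed.Build C (hV H * hV H)%type Kpred Kpred_submod.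

Inductive Kt : predArgType := KSub p & p \in Kpred.
Definition Kval (k : Kt) := let: KSub p _ := k in p.
HB.instance Definition _ := [isSub of Kt for Kval].
HB.instance Definition _ := [Choice of Kt by <:].
HB.instance Definition _ := [SubChoice_isSubZmodule of Kt by <:].
HB.instance Definition _ := [SubZmodule_isSubLmodule of Kt by <:].

Lemma Kval2 (x : Kt) : Tu (Kval x).2 = (Kval x).2.
Proof. by case: x => p /= pf; move: pf; rewrite unfold_in /Kpred => /eqP. Qed.

Definition innerK (x y : Kt) : C :=
  inner (Kval x).1 (Kval y).1 + inner (Kval x).2 (Kval y).2.

Lemma innerK_linear (a : C) (x y z : Kt) :
  innerK (a *: x + y) z = a * innerK x z + innerK y z.
Proof. by rewrite /innerK /= !inner_linear addrACA -mulrDr. Qed.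

Lemma innerK_conj (x y : Kt) : innerK y x = Num.conj (innerK x y).
Proof. by rewrite /innerK rmorphD /= -!inner_conj. Qed.

Lemma innerK_ge0 (x : Kt) : 0 <= innerK x x.
Proof. by rewrite /innerK addr_ge0 ?inner_ge0. Qed.

Lemma innerK_eq0 (x : Kt) : innerK x x = 0 -> x = 0.
Proof.
move/eqP; rewrite /innerK paddr_eq0 ?inner_ge0 // => /andP [/eqP h1 /eqP h2].
apply: val_inj; case: x h1 h2 => [[p1 p2] pf] /= /inner_eq0 -> /inner_eq0 -> //.
Qed.

Lemma innerK_le1 (x : Kt) : inner (Kval x).1 (Kval x).1 <= innerK x x.
Proof. by rewrite /innerK lerDl inner_ge0. Qed.
Lemma innerK_le2 (x : Kt) : inner (Kval x).2 (Kval x).2 <= innerK x x.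
Proof. by rewrite /innerK lerDr inner_ge0. Qed.

Lemma innerK_complete (u : nat -> Kt) :
  (forall eps : C, 0 < eps -> exists N : nat, forall m n : nat,
     (N <= m)%N -> (N <= n)%N -> innerK (u m - u n) (u m - u n) < eps) ->
  exists l : Kt, forall eps : C, 0 < eps -> exists N : nat, forall n : nat,
     (N <= n)%N -> innerK (u n - l) (u n - l) < eps.
Proof.
move=> Cu.
pose a n := (Kval (u n)).1; pose b n := (Kval (u n)).2.
have [la Hla] : exists l, forall eps : C, 0 < eps -> exists N : nat, forall n : nat,
    (N <= n)%N -> inner (a n - l) (a n - l) < eps.
  apply: inner_complete => eps /Cu [N HN]; exists N => m n hm hn.
  exact: le_lt_trans (innerK_le1 (u m - u n)) (HN m n hm hn).
have [lb Hlb] : exists l, forall eps : C, 0 < eps -> exists N : nat, forall n : nat,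
    (N <= n)%N -> inner (b n - l) (b n - l) < eps.
  apply: inner_complete => eps /Cu [N HN]; exists N => m n hm hn.
  exact: le_lt_trans (innerK_le2 (u m - u n)) (HN m n hm hn).
have Tlb : Tu lb = lb.
  apply/eqP; rewrite -subr_eq0; apply/eqP/inner_eq0/small_eq0; first exact: inner_ge0.
  move=> eps eps0.
  have e4 : 0 < eps / 4%:R by rewrite divr_gt0 // ltr0n.
  have [N HN] := Hlb _ e4; have := HN N (leqnn N).
  set z := b N - lb => hz.
  have E : Tu lb - lb = - (Tu z - z).
    rewrite /z (linB LTu) /b Kval2 !opprB [RHS]addrC addrA subrK //.
  rewrite E innerNN; apply: le_lt_trans (para_le _ _) _.
  apply: (@le_lt_trans _ _ (2%:R * (inner z z + inner z z))).
    by rewrite ler_wpM2l // lerD2r (proj_le LTu ATu ITu).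
  have -> : 2%:R * (inner z z + inner z z) = 4%:R * inner z z.
    by ring.
  have -> : eps = 4%:R * (eps / 4%:R) by rewrite mulrC divfK // pnatr_eq0.
  by rewrite ltr_pM2l // ltr0n.
have Hl : (la, lb) \in Kpred by rewrite unfold_in /Kpred /= Tlb.
exists (KSub Hl) => eps eps0.
have e2 : 0 < eps / 2%:R by rewrite divr_gt0 // ltr0n.
have [Na HNa] := Hla _ e2; have [Nb HNb] := Hlb _ e2.
exists (maxn Na Nb) => n hn; rewrite /innerK [eps]splitr.
by apply: ltrD; [apply: HNa; apply: leq_trans hn; exact: leq_maxl
                |apply: HNb; apply: leq_trans hn; exact: leq_maxr].
Qed.

Definition Khil : hilbert :=
  @Hilbert Kt innerK innerK_linear innerK_conj innerK_ge0 innerK_eq0 innerK_complete.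

Lemma mk1_in (h : hV H) : (h, 0) \in Kpred.
Proof. by rewrite unfold_in /Kpred /= (lin0 LTu). Qed.
Lemma mk2_in (h : hV H) : (0, Tu h) \in Kpred.
Proof. by rewrite unfold_in /Kpred /= ITu. Qed.
Definition mk1 (h : hV H) : hV Khil := KSub (mk1_in h).
Definition mk2 (h : hV H) : hV Khil := KSub (mk2_in h).
Definition p1 (x : hV Khil) : hV H := (Kval x).1.
Definition p2 (x : hV Khil) : hV H := (Kval x).2.

Lemma p1_mk1 h : p1 (mk1 h) = h. Proof. by []. Qed.
Lemma p2_mk1 h : p2 (mk1 h) = 0. Proof. by []. Qed.
Lemma p1_mk2 h : p1 (mk2 h) = 0. Proof. by []. Qed.
Lemma p2_mk2 h : p2 (mk2 h) = Tu h. Proof. by []. Qed.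
Lemma Tu_p2 x : Tu (p2 x) = p2 x. Proof. exact: Kval2. Qed.

Lemma K_ext (x y : hV Khil) : p1 x = p1 y -> p2 x = p2 y -> x = y.
Proof.
move=> h1 h2; apply: val_inj; case: x h1 h2 => [[a b] ?]; case: y => [[c d] ?].
by rewrite /p1 /p2 /= => -> ->.
Qed.

Lemma p1D x y : p1 (x + y) = p1 x + p1 y. Proof. by []. Qed.
Lemma p2D x y : p2 (x + y) = p2 x + p2 y. Proof. by []. Qed.
Lemma p1Z a x : p1 (a *: x) = a *: p1 x. Proof. by []. Qed.
Lemma p2Z a x : p2 (a *: x) = a *: p2 x. Proof. by []. Qed.
Lemma p10 : p1 0 = 0. Proof. by []. Qed.
Lemma p20 : p2 0 = 0. Proof. by []. Qed.
Lemma p1N x : p1 (- x) = - p1 x. Proof. by []. Qed.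
Lemma p2N x : p2 (- x) = - p2 x. Proof. by []. Qed.
Lemma p1B x y : p1 (x - y) = p1 x - p1 y. Proof. by []. Qed.
Lemma p2B x y : p2 (x - y) = p2 x - p2 y. Proof. by []. Qed.

Lemma p1_sum (I : finType) (P : pred I) (F : I -> hV Khil) :
  p1 (\sum_(i | P i) F i) = \sum_(i | P i) p1 (F i).
Proof. by elim/big_rec2: _ => [|i a b _ <-]. Qed.
Lemma p2_sum (I : finType) (P : pred I) (F : I -> hV Khil) :
  p2 (\sum_(i | P i) F i) = \sum_(i | P i) p2 (F i).
Proof. by elim/big_rec2: _ => [|i a b _ <-]. Qed.

Lemma innerKE (x y : hV Khil) : inner x y = inner (p1 x) (p1 y) + inner (p2 x) (p2 y).
Proof. by []. Qed.

Lemma K_decomp x : x = mk1 (p1 x) + mk2 (p2 x).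
Proof.
apply: K_ext; first by rewrite p1D p1_mk1 p1_mk2 addr0.
by rewrite p2D p2_mk1 p2_mk2 add0r Tu_p2.
Qed.

Lemma bop_mk1 : bop mk1.
Proof.
split.
  rewrite /lin => a x y; apply: K_ext; first by rewrite p1D p1Z !p1_mk1.
  by rewrite p2D p2Z !p2_mk1 scaler0 addr0.
exists 1; split=> // h; rewrite innerKE p1_mk1 p2_mk1 inner0l addr0 mul1r //.
Qed.

Lemma bop_mk2 : bop mk2.
Proof.
split.
  rewrite /lin => a x y; apply: K_ext; first by rewrite p1D p1Z !p1_mk2 scaler0 addr0.
  by rewrite p2D p2Z !p2_mk2 LTu.
exists 1; split=> // h; rewrite innerKE p1_mk2 p2_mk2 inner0l add0r mul1r.
exact: proj_le.
Qed.

Lemma bop_p1 : bop p1.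
Proof.
split=> //; exists 1; split=> // x; rewrite mul1r; exact: innerK_le1.
Qed.

Lemma bop_p2 : bop p2.
Proof.
split=> //; exists 1; split=> // x; rewrite mul1r; exact: innerK_le2.
Qed.

End KS.
End K.
Import K.


Section Build.
Variables (G : graph) (e : gE G) (H : hilbert).
Local Notation G' := (contract e).
Variables (Tv : gV G' -> op H) (Te Tes : gE G' -> op H).
Hypotheses (BTv : forall v, bounded_op (Tv v)) (BTe : forall f, bounded_op (Te f))
  (ATe : forall f, is_adjoint (Te f) (Tes f)) (ATv : forall v, is_adjoint (Tv v) (Tv v))
  (ITv : forall v x, Tv v (Tv v x) = Tv v x)
  (OTv : forall v w, v != w -> forall x, Tv v (Tv w x) = 0)
  (STe : forall f x, Tes f (Te f x) = Tv (gs f) x)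
  (CKT : forall (v : gV G') (F : {set gE G'}), (forall f, f \in F -> gr f = v) ->
        forall x, 0 <= inner (Tv v x - \sum_(f in F) Te f (Tes f x)) x)
  (SUMT : forall x, \sum_(v : gV G') Tv v x = x).
Hypotheses (Hne : gr e != gs e) (H1 : indeg (gr e) = 1%N).
Variable g : gE G.
Hypothesis Hg : gs g = gr e.

Local Notation u' := (rho e (gs e)).
Local Notation Tu := (Tv u').
Let LTu : lin Tu := (BTv u').1.
Let ATu : is_adjoint Tu Tu := ATv u'.
Let ITu : forall x, Tu (Tu x) = Tu x := ITv u'.
Local Notation KH := (Khil LTu ATu ITu).
Local Notation mk1 := (K.mk1 LTu ATu ITu).
Local Notation mk2 := (K.mk2 LTu ATu ITu).
Local Notation p1 := (@K.p1 H Tu LTu ATu ITu).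
Local Notation p2 := (@K.p2 H Tu LTu ATu ITu).

Lemma rho_w : rho e (gr e) = u'.
Proof.
apply: val_inj; rewrite /= /redirect eqxx.
by rewrite eq_sym (negbTE Hne).
Qed.

Lemma rho_neq (v : gV G) : v != gr e -> val (rho e v) = v.
Proof. by rewrite /= /redirect => /negbTE ->. Qed.

Lemma LTv v : lin (Tv v). Proof. exact: (BTv v).1. Qed.
Lemma LTe f : lin (Te f). Proof. exact: (BTe f).1. Qed.
Lemma LTes f : lin (Tes f). Proof. exact: adj_lin (LTe f) (ATe f). Qed.

Lemma bop_Tes f : bop (Tes f).
Proof.
split; first exact: LTes.
exists 1; split=> // y; rewrite mul1r.
apply: (adj_bound (LTv (gr f)) (ATv _) (ITv _) (ATe f)) => z.
have := CKT (F := [set f]) (v := gr f) _ z; rewrite big_set1; apply.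
by move=> f0; rewrite inE => /eqP ->.
Qed.

Lemma Te_piso f z : Te f (Tv (gs f) z) = Te f z.
Proof. exact: partial_iso (LTe f) (LTv _) (ATe f) (ITv _) (STe f) z. Qed.

Definition Sv (v : gV G) (x : hV KH) : hV KH :=
  if v == gr e then mk2 (p2 x) else mk1 (Tv (rho e v) (p1 x)).
Definition Se (f : gE G) (x : hV KH) : hV KH :=
  match ein e f with
  | Some f' => if gs f == gr e then mk1 (Te f' (p2 x)) else mk1 (Te f' (p1 x))
  | None => mk2 (p1 x) end.
Definition Ses (f : gE G) (x : hV KH) : hV KH :=
  match ein e f with
  | Some f' => if gs f == gr e then mk2 (Tes f' (p1 x)) else mk1 (Tes f' (p1 x))
  | None => mk1 (Tu (p2 x)) end.

Lemma bopK (T : op H) (i j : bool) : bop T ->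
  bounded_op (fun x : hV KH => (if i then mk2 else mk1) (T ((if j then p2 else p1) x))).
Proof.
move=> BT; apply/bounded_bopP.
have Bp : bop (if j then p2 else p1) by case: j; [exact: bop_p2 | exact: bop_p1].
have Bm : bop (if i then mk2 else mk1) by case: i; [exact: bop_mk2 | exact: bop_mk1].
exact: bop_comp (bop_comp Bp BT) Bm.
Qed.

Lemma bop_id : bop (id : op H).
Proof. by split=> //; exists 1; split=> // x; rewrite mul1r. Qed.

Lemma bounded_Sv v : bounded_op (Sv v).
Proof.
rewrite /Sv; case: (v == gr e).
  exact: (@bopK id true true bop_id).
apply: (@bopK (Tv (rho e v)) false false); exact/bounded_bopP.
Qed.

Lemma bounded_Se f : bounded_op (Se f).
Proof.
rewrite /Se; case: (ein e f) => [f'|]; last exact: (@bopK id true false bop_id).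
case: (gs f == gr e).
  apply: (@bopK (Te f') false true); exact/bounded_bopP.
apply: (@bopK (Te f') false false); exact/bounded_bopP.
Qed.

Lemma gs_c (f' : gE G') : gs f' = rho e (gs (val f')). Proof. by []. Qed.
Lemma gr_c (f' : gE G') : gr f' = rho e (gr (val f')). Proof. by []. Qed.

Lemma adj_Se f : is_adjoint (Se f) (Ses f).
Proof.
move=> x y; rewrite /Se /Ses; case: (ein e f) => [f'|]; last first.
  rewrite !innerKE !p1_mk1 !p2_mk1 !p1_mk2 !p2_mk2 inner0l inner0r add0r addr0.
  exact: ATu.
case: (gs f == gr e); rewrite !innerKE ?p1_mk1 ?p2_mk1 ?p1_mk2 ?p2_mk2 inner0l inner0r ?add0r ?addr0.
  by rewrite -ATu Tu_p2 ATe.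
exact: ATe.
Qed.

Lemma adj_Sv v : is_adjoint (Sv v) (Sv v).
Proof.
move=> x y; rewrite /Sv; case: (v == gr e);
  rewrite !innerKE ?p1_mk1 ?p2_mk1 ?p1_mk2 ?p2_mk2 inner0l inner0r ?add0r ?addr0.
  exact: ATu.
exact: ATv.
Qed.

Lemma idem_Sv v x : Sv v (Sv v x) = Sv v x.
Proof.
rewrite /Sv; case: (v == gr e); first by rewrite p2_mk2 Tu_p2.
by rewrite p1_mk1 ITv.
Qed.

Lemma mk1_0 : mk1 0 = 0. Proof. exact: (lin0 (bop_mk1 LTu ATu ITu).1). Qed.
Lemma mk2_0 : mk2 0 = 0. Proof. exact: (lin0 (bop_mk2 LTu ATu ITu).1). Qed.

Lemma orth_Sv v w : v != w -> forall x, Sv v (Sv w x) = 0.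
Proof.
move=> vw x; rewrite /Sv.
case: eqP => [Ev|nv]; case: eqP => [Ew|nw].
- by rewrite Ev Ew eqxx in vw.
- by rewrite p2_mk1 mk2_0.
- by rewrite p1_mk2 (lin0 (LTv _)) mk1_0.
rewrite p1_mk1 OTv ?mk1_0 //; apply: contra vw => /eqP /(congr1 val).
by rewrite !rho_neq //; [move=> ->|apply/eqP|apply/eqP].
Qed.

Lemma SesSe f x : Ses f (Se f x) = Sv (gs f) x.
Proof.
rewrite /Se /Ses /Sv /ein; case: insubP => [f' fne Ef|nfe].
  case: eqP => [Es|Ns].
    rewrite p1_mk1 STe gs_c Ef Es rho_w; congr mk2; exact: Tu_p2.
  by rewrite p1_mk1 STe gs_c Ef.
have -> : f = e by apply/eqP; move: nfe; rewrite negbK.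
rewrite eq_sym (negbTE Hne) p2_mk2 ITu //.
Qed.

Lemma ein_e : ein e e = None.
Proof. by rewrite /ein insubF // eqxx. Qed.

Lemma ein_val (f' : gE G') : ein e (val f') = Some f'.
Proof. exact: valK. Qed.

Lemma SeSes_val (f' : gE G') x :
  Se (val f') (Ses (val f') x) = mk1 (Te f' (Tes f' (p1 x))).
Proof.
rewrite /Se /Ses ein_val; case: eqP => [Es|Ns]; last by rewrite p1_mk1.
rewrite p2_mk2; congr mk1.
by have := Te_piso f' (Tes f' (p1 x)); rewrite gs_c Es rho_w.
Qed.

Lemma CK_S (v : gV G) (F : {set gE G}) : (forall f, f \in F -> gr f = v) ->
  forall x, 0 <= inner (Sv v x - \sum_(f in F) Se f (Ses f x)) x.
Proof.
move=> HF x; rewrite /Sv; case: eqP => [Ev|Nv].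
  have : F \subset [set e].
    apply/subsetP => f /HF Ef; rewrite inE; apply/eqP.
    by apply: (indeg1_uniq H1); rewrite Ef Ev.
  rewrite subset1 => /orP [/eqP ->|/eqP ->].
    rewrite big_set1 /Ses /Se ein_e p1_mk1.
    have -> : mk2 (p2 x) - mk2 (Tu (p2 x)) = 0 by rewrite Tu_p2 subrr.
    by rewrite inner0l.
  rewrite big_set0 subr0 innerKE p1_mk2 p2_mk2 inner0l add0r.
  exact: (proj_ge0 ATu ITu).
pose F' := [set f' : gE G' | val f' \in F].
have EF : F = val @: F'.
  apply/setP => f; apply/idP/imsetP => [fF|[f' + ->]]; last by rewrite inE.
  have fne : f != e by apply/eqP => Efe; apply: Nv; rewrite -(HF f fF) Efe.
  by exists (exist _ f fne : gE G') => //; rewrite inE.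
rewrite EF big_imset; last by move=> a b _ _; exact: val_inj.
under eq_bigr => f' _ do rewrite SeSes_val.
rewrite -(lin_sum (bop_mk1 LTu ATu ITu).1) -(linB (bop_mk1 LTu ATu ITu).1).
rewrite innerKE p1_mk1 p2_mk1 inner0l addr0.
apply: CKT => f'; rewrite inE => /HF Ef; by rewrite gr_c Ef.
Qed.

Lemma sum_Sv x : \sum_(v : gV G) Sv v x = x.
Proof.
rewrite (bigD1 (gr e)) //= {1}/Sv eqxx.
have -> : \sum_(v | v != gr e) Sv v x = \sum_(v | v != gr e) mk1 (Tv (rho e v) (p1 x)).
  by apply: eq_bigr => v /negbTE Hv; rewrite /Sv Hv.
rewrite -(lin_sum (bop_mk1 LTu ATu ITu).1).
have -> : \sum_(v | v != gr e) Tv (rho e v) (p1 x) = \sum_(v' : gV G') Tv v' (p1 x).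
  have Eset : [set v | v != gr e] = val @: [set: gV G'].
    apply/setP => v; rewrite inE; apply/idP/imsetP => [vne|[v' _ ->]].
      have pv : cV_pred e v by rewrite cV_predE.
      by exists (exist _ v pv : gV G').
    by case: v' => v' /=; rewrite cV_predE.
  rewrite (eq_bigl (fun v => v \in [set v | v != gr e])); last by move=> v; rewrite inE.
  rewrite Eset big_imset /=; last by move=> a b _ _; exact: val_inj.
  by apply: eq_big => [v'|v' _]; rewrite ?inE // rho_val.
by rewrite SUMT addrC -K_decomp.
Qed.

Lemma tck_S : tck_family Sv Se.
Proof.
split; first exact: bounded_Sv.
split; first exact: bounded_Se.
exists Ses; split; first exact: adj_Se.
split; first exact: adj_Sv.
split; first exact: idem_Sv.
split; first exact: orth_Sv.
split; first exact: SesSe.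
split; first exact: CK_S.
exact: sum_Sv.
Qed.

Definition blk (X : op H) : op KH := fun x => mk1 (X (p1 x)).

Lemma mk2_Tu z : mk2 (Tu z) = mk2 z.
Proof. by apply: K_ext; rewrite ?p1_mk2 // !p2_mk2 ITu. Qed.

Lemma mk1D a b : mk1 (a + b) = mk1 a + mk1 b.
Proof. exact: (linD (bop_mk1 LTu ATu ITu).1). Qed.
Lemma mk1Z c a : mk1 (c *: a) = c *: mk1 a.
Proof. exact: (linZ (bop_mk1 LTu ATu ITu).1). Qed.

Lemma gen_S : generates_BH Tv Te -> generates_BH Sv Se.
Proof.
move=> genT A [Abnd [Aadd [Ascal Acomp]]] Awot ASv ASe.
pose A' (X : op H) := A (blk X).
have unblk X : A' X -> bounded_op X.
  move=> /Abnd /bounded_bopP BX; apply/bounded_bopP.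
  exact: bop_comp (bop_comp (bop_mk1 LTu ATu ITu) BX) (bop_p1 LTu ATu ITu).
have subA : op_subalgebra A'.
  split; first exact: unblk.
  split.
    move=> X Y AX AY; have := Aadd _ _ AX AY; congr A.
    by apply: functional_extensionality => x; rewrite /blk mk1D.
  split.
    move=> c X AX; have := Ascal c _ AX; congr A.
    by apply: functional_extensionality => x; rewrite /blk mk1Z.
  move=> X Y AX AY; exact: Acomp _ _ AX AY.
have wotA : wot_closed A'.
  move=> X [BX HX]; apply: Awot; split.
    by apply: (@bopK X false false); exact/bounded_bopP.
  move=> s eps eps0.
  have [U [AU HU]] := HX [seq (p1 xy.1, p1 xy.2) | xy <- s] eps eps0.
  exists (blk U); split=> // xy xys.
  rewrite innerKE /blk p1B p2B !p1_mk1 !p2_mk1 subrr inner0l addr0.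
  exact: (HU (p1 xy.1, p1 xy.2) (map_f _ xys)).
have AgV : forall v, A' (Tv v).
  move=> v; have := ASv (val v); congr A.
  apply: functional_extensionality => x; rewrite /Sv /blk.
  have vne : val v != gr e by case: v => v /=; rewrite cV_predE.
  by rewrite (negbTE vne) rho_val.
have AgE : forall f, A' (Te f).
  move=> f; case: (eqVneq (gs (val f)) (gr e)) => [Es|Ns].
    have := Acomp _ _ (ASe (val f)) (ASe e); congr A.
    apply: functional_extensionality => x; rewrite /Se ein_val ein_e Es eqxx /blk.
    rewrite p2_mk2; congr mk1.
    by have := Te_piso f (p1 x); rewrite gs_c Es rho_w.
  have := ASe (val f); congr A.
  apply: functional_extensionality => x; rewrite /Se ein_val /blk.
  by rewrite (negbTE Ns).
have Ablk : forall X, bounded_op X -> A (blk X).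
  exact: genT subA wotA AgV AgE.
move=> T /bounded_bopP BT.
have gne : g != e by apply/eqP => Ege; move: Hne; rewrite -Hg Ege eqxx.
pose g' : gE G' := exist _ g gne.
have B11 : bounded_op (fun h => p1 (T (mk1 h))).
  apply/bounded_bopP.
  exact: bop_comp (bop_comp (bop_mk1 LTu ATu ITu) BT) (bop_p1 LTu ATu ITu).
have B21 : bounded_op (fun h => p2 (T (mk1 h))).
  apply/bounded_bopP.
  exact: bop_comp (bop_comp (bop_mk1 LTu ATu ITu) BT) (bop_p2 LTu ATu ITu).
have B12 : bounded_op (fun h => p1 (T (mk2 (Tes g' h)))).
  apply/bounded_bopP.
  exact: bop_comp (bop_comp (bop_comp (bop_Tes g') (bop_mk2 LTu ATu ITu)) BT) (bop_p1 LTu ATu ITu).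
have B22 : bounded_op (fun h => p2 (T (mk2 (Tes g' h)))).
  apply/bounded_bopP.
  exact: bop_comp (bop_comp (bop_comp (bop_Tes g') (bop_mk2 LTu ATu ITu)) BT) (bop_p2 LTu ATu ITu).
have A1 := Ablk _ B11.
have A2 := Acomp _ _ (ASe e) (Ablk _ B21).
have A3 := Acomp _ _ (Ablk _ B12) (ASe (val g')).
have A4 := Acomp _ _ (ASe e) (Acomp _ _ (Ablk _ B22) (ASe (val g'))).
have := Aadd _ _ (Aadd _ _ (Aadd _ _ A1 A2) A3) A4; congr A.
apply: functional_extensionality => x.
have Eg : gs (val g') == gr e by rewrite /= Hg.
have Eg' : gs g' = u' by rewrite gs_c /= Hg rho_w.
rewrite /Se ein_e ein_val /blk Eg !p1_mk1 STe Eg' mk2_Tu.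
rewrite -addrA -!K_decomp -(linD BT.1).
by rewrite -K_decomp.
Qed.

Lemma has_K : generates_BH Tv Te -> (exists x : hV H, x != 0) -> has_BH_fsa G KH.
Proof.
move=> gen [x xne]; split.
  exists (mk1 x); apply: contra xne => /eqP E.
  by rewrite -(p1_mk1 LTu ATu ITu x) E.
by exists Sv, Se; split; [exact: tck_S | exact: gen_S].
Qed.
End Build.

Lemma step_lemma (G : graph) (e : gE G) (H : hilbert) :
  gr e != gs e -> indeg (gr e) = 1%N -> (exists g, gs g = gr e) ->
  has_BH_fsa (contract e) H -> exists K : hilbert, has_BH_fsa G K.
Proof.
move=> Hne H1 [g Hg] [Hx [Tv [Te [[BTv [BTe [Tes [ATe [ATv [ITv [OTv [STe [CKT SUMT]]]]]]]]] gen]]]].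
eexists; exact: (has_K BTv BTe ATe ATv ITv OTv STe CKT SUMT Hne H1 Hg gen Hx).
Qed.

Local Close Scope ring_scope.

Lemma main_ind G Gt : contracts_to G Gt -> Inv G ->
  Inv Gt /\ ((exists H : hilbert, has_BH_fsa Gt H) -> exists K : hilbert, has_BH_fsa G K).
Proof.
elim=> {G Gt} [G|G G1 Gt [e [H1 ->]] _ IH] HI; first by split.
have [Hne Hg HI1] := inv_step HI H1.
have [HIt Himp] := IH HI1; split=> // /Himp [K HK].
exact: step_lemma Hne H1 Hg HK.
Qed.

Theorem corollary3p5 (G Gt : graph) :
  transitive_graph G -> ~ is_cycle G ->
  contracts_to G Gt -> fully_contracted Gt ->
  (forall v : gV Gt, (2 <= indeg v)%N) /\
  ((exists H : hilbert, has_BH_fsa Gt H) -> exists K : hilbert, has_BH_fsa G K).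
Proof.
move=> Htr Hc Hct Hfc.
have [HIt Himp] := main_ind Hct (inv_init Htr Hc).
by split=> //; apply: part1.
Qed.
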